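(* Let $(\mathcal{B},\|\cdot\|)$ be a Banach algebra with unity $e$ and let $U\subset\mathbb{R}^d$ be open. Assume $A,X:U\to\mathcal{B}$ are $C^s$-maps, $s\in\mathbb{N}_0$, and $A^{-1}(\lambda)$ exists for all $\lambda\in U$. Suppose there exist constants $\epsilon>0$, $M\ge1$, $C\ge1$ with $\|\partial^\beta A^{-1}(\lambda)\|\le MC^{|\beta|_1}$ and $\|\partial^\beta X(\lambda)\|\le\epsilon C^{|\beta|_1}$ for all $\lambda\in U$, $0\le|\beta|_1\le s$, and $\epsilon M\le\frac12$. Then $(A+X)(\lambda)$ is invertible in $\mathcal{B}$ for all $\lambda\in U$ and $$\|\partial^\beta(A+X)^{-1}(\lambda)\|\le2\Big(\sum_{k=1}^{|\beta|_1+1}k^{|\beta|_1}\|e\|^k\Big)M(2C)^{|\beta|_1}\quad\text{for }\lambda\in U,\ 0\le|\beta|_1\le s.$$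
   Context: $\beta\in\mathbb{N}_0^d$ is a multi-index, $|\beta|_1=\sum_i\beta_i$, $\partial^\beta$ the corresponding partial derivative. *)

(* Defs.v *)
From HB Require Import structures.
From mathcomp Require Import all_boot all_order all_algebra.
From mathcomp Require Import all_classical all_reals all_analysis.
Set Implicit Arguments. Unset Strict Implicit. Unset Printing Implicit Defensive.
Import Order.TTheory GRing.Theory Num.Theory.
Import numFieldNormedType.Exports.
Local Open Scope classical_set_scope.
Local Open Scope ring_scope.

(* A (real) Banach algebra with unity e: a complete normed R-vector space B
   with an associative bilinear multiplication [mul] having two-sided unit e
   and a submultiplicative norm.  (No normalisation ||e|| = 1 is assumed.) *)
Record banach_algebra (R : realType) (B : completeNormedModType R)
    (mul : B -> B -> B) (e : B) : Prop := {
  ba_assoc : associative mul;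
  ba_mul1l : left_id e mul;
  ba_mul1r : right_id e mul;
  ba_mulDl : left_distributive mul +%R;
  ba_mulDr : right_distributive mul +%R;
  ba_scalel : forall (a : R) (x y : B), mul (a *: x) y = a *: mul x y;
  ba_scaler : forall (a : R) (x y : B), mul x (a *: y) = a *: mul x y;
  ba_submult : forall x y : B, `|mul x y| <= `|x| * `|y|
}.

Definition is_inverse (B : Type) (mul : B -> B -> B) (e x y : B) : Prop :=
  mul x y = e /\ mul y x = e.

Definition unitv (R : realType) (d : nat) (i : 'I_d) : 'rV[R]_d := delta_mx 0 i.

Definition partial (R : realType) (d : nat) (B : normedModType R)
    (i : 'I_d) (f : 'rV[R]_d -> B) : 'rV[R]_d -> B :=
  fun x => 'D_(unitv R i) f x.

(* iterated partial derivative along the list of directions l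
   (the head of l is the outermost derivative) *)
Definition iter_partial (R : realType) (d : nat) (B : normedModType R)
    (l : seq 'I_d) (f : 'rV[R]_d -> B) : 'rV[R]_d -> B :=
  foldr (@partial R d B) f l.

Definition mindex_norm (d : nat) (beta : 'I_d -> nat) : nat :=
  (\sum_(i < d) beta i)%N.

Definition dpartial (R : realType) (d : nat) (B : normedModType R)
    (beta : 'I_d -> nat) (f : 'rV[R]_d -> B) : 'rV[R]_d -> B :=
  iter_partial (flatten [seq nseq (beta i) i | i <- enum 'I_d]) f.

Definition Cs_on (R : realType) (d : nat) (B : normedModType R)
    (s : nat) (U : set 'rV[R]_d) (f : 'rV[R]_d -> B) : Prop :=
  forall l : seq 'I_d, (size l <= s)%N ->
    (forall x, U x -> {for x, continuous (iter_partial l f)}) /\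
    ((size l < s)%N -> forall (i : 'I_d) x, U x ->
        derivable (iter_partial l f) x (unitv R i)).

(* Main.v *)
Require Import Defs.
From HB Require Import structures.
From mathcomp Require Import all_boot all_order all_algebra.
From mathcomp Require Import all_classical all_reals all_analysis.
From mathcomp Require Import ring lra zify.
Import Order.TTheory GRing.Theory Num.Theory.
Import numFieldNormedType.Exports.
Local Open Scope classical_set_scope.
Local Open Scope ring_scope.
Set Implicit Arguments. Unset Strict Implicit. Unset Printing Implicit Defensive.

Lemma geom2 n : ((\sum_(j < n) 2 ^ j).+1 = 2 ^ n)%N.
Proof.
elim: n => [|n IH]; first by rewrite big_ord0.
by rewrite big_ord_recr /= -addSn IH expnS; lia.
Qed.

Lemma nat1 n : (1 + \sum_(j < n) n`! * 2 ^ (n + j) <= 4 ^ n * n`!)%N.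
Proof.
have -> : (\sum_(j < n) n`! * 2 ^ (n + j) = n`! * 2 ^ n * \sum_(j < n) 2 ^ j)%N.
  rewrite big_distrr /=; apply: eq_bigr => j _; by rewrite expnD mulnA.
have -> : (4 ^ n = 2 ^ n * 2 ^ n)%N by rewrite -expnMn.
rewrite -[X in (_ <= X * _ * _)%N]geom2.
have h1 := fact_gt0 n; have h2 : (0 < 2 ^ n)%N by rewrite expn_gt0.
nia.
Qed.

Lemma bern m k : (m ^ k.+1 + k.+1 * m ^ k <= m.+1 ^ k.+1)%N.
Proof.
elim: k => [|k IH]; first by rewrite !expn1 expn0; lia.
have IH2 := leq_mul (leqnn m.+1) IH.
rewrite (expnS m k.+1) (expnS m.+1 k.+1).
move: IH2; rewrite (expnS m k); set a := (m ^ k)%N; set b := (m.+1 ^ k.+1)%N.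
nia.
Qed.

Lemma nat2 n : (2 ^ n * n`! <= n.+1 ^ n)%N.
Proof.
elim: n => [|n IH] //.
rewrite expnS factS.
have := bern n.+1 n.
rewrite (expnS n.+1 n).
nia.
Qed.

Definition flat (d : nat) (beta : 'I_d -> nat) : seq 'I_d :=
  flatten [seq nseq (beta i) i | i <- enum 'I_d].

Definition leo (d : nat) := fun i j : 'I_d => (i <= j)%N.

Lemma size_flat d (beta : 'I_d -> nat) : size (flat beta) = (\sum_(i < d) beta i)%N.
Proof.
rewrite /flat size_flatten /shape -map_comp sumnE big_map.
rewrite big_enum /=; apply: eq_bigr => i _; exact: size_nseq.
Qed.

Lemma count_flat d (beta : 'I_d -> nat) x : count_mem x (flat beta) = beta x.
Proof.
rewrite /flat count_flatten -map_comp sumnE big_map big_enum /=.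
rewrite (bigD1 x) //= big1 ?addn0.
  by rewrite count_nseq /= eqxx mul1n.
by move=> i ix; rewrite count_nseq /= (negbTE ix).
Qed.

Lemma sorted_flat d (beta : 'I_d -> nat) : sorted (@leo d) (flat beta).
Proof.
have tr : transitive (@leo d) by move=> a b c; exact: leq_trans.
rewrite /flat sorted_pairwise //.
have : sorted (relpre val ltn) (enum 'I_d) by rewrite -sorted_map val_enum_ord iota_ltn_sorted.
elim: (enum 'I_d) => [//|i s IH] /= hs.
rewrite pairwise_cat; apply/and3P; split.
- apply/allrelP => a b /nseqP [-> _] /flattenP [t /mapP [j js ->]] /nseqP [-> _].
  have trl : transitive (relpre (@nat_of_ord d) ltn) by move=> u v w; exact: ltn_trans.
  have := order_path_min trl hs. move=> /allP /(_ j js) /=.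
  by move/ltnW.
- elim: (beta i) => //= k IHk; rewrite IHk andbT; apply/allP => y /nseqP [-> _]; exact: leqnn.
- by apply: IH; exact: path_sorted hs.
Qed.

Lemma sorted_flatE d (l : seq 'I_d) : sorted (@leo d) l ->
  l = flat (fun i => count_mem i l).
Proof.
move=> sl; apply: (sorted_eq _ _ sl (sorted_flat _)).
- by move=> a b c; exact: leq_trans.
- by move=> a b /andP [h1 h2]; apply: val_inj; apply/eqP; rewrite eqn_leq; apply/andP; split.
- by apply/allP => x _ /=; rewrite count_flat.
Qed.

Lemma pascal_sum (R : comPzRingType) (phi psi : nat -> R) n :
  \sum_(j < n.+2) 'C(n.+1, j)%:R * phi j * psi (n.+1 - j)%N =
  \sum_(j < n.+1) 'C(n, j)%:R * phi j.+1 * psi (n - j)%N +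
  \sum_(j < n.+1) 'C(n, j)%:R * phi j * psi (n - j).+1.
Proof.
rewrite big_ord_recl /=.
under eq_bigr do rewrite /bump /= add1n binS natrD !mulrDl subSS.
rewrite big_split /= [RHS]addrC addrA; congr (_ + _).
rewrite [RHS]big_ord_recl /= [in X in _ + X = _]big_ord_recr /=.
rewrite (bin_small (ltnSn n)) !mul0r addr0.
rewrite !bin0 !subn0; congr (_ + _); apply: eq_bigr => j _.
by rewrite /bump /= subnSK.
Qed.

Section Alg.
Context (R : realType) (B : completeNormedModType R) (mul : B -> B -> B) (e : B)
  (BA : banach_algebra mul e).

Lemma mul0x x : mul 0 x = 0.
Proof.
have := ba_scalel BA 0 0 x; by rewrite !scale0r.
Qed.
Lemma mulx0 x : mul x 0 = 0.
Proof. have := ba_scaler BA 0 x 0; by rewrite !scale0r. Qed.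
Lemma mulNx x y : mul (- x) y = - mul x y.
Proof. by rewrite -scaleN1r (ba_scalel BA) scaleN1r. Qed.
Lemma mulxN x y : mul x (- y) = - mul x y.
Proof. by rewrite -scaleN1r (ba_scaler BA) scaleN1r. Qed.
Lemma mulBx x y z : mul (x - y) z = mul x z - mul y z.
Proof. by rewrite (ba_mulDl BA) mulNx. Qed.
Lemma mulxB x y z : mul x (y - z) = mul x y - mul x z.
Proof. by rewrite (ba_mulDr BA) mulxN. Qed.

Lemma mul_cvg {T} (F : set_system T) {FF : Filter F} (a b : T -> B) la lb :
  a @ F --> la -> b @ F --> lb -> (fun t => mul (a t) (b t)) @ F --> mul la lb.
Proof.
move=> ha hb; apply/subr_cvg0; apply: (@norm_cvg0 R B T F FF).
have Hub : (fun t => `|a t - la| * `|b t| + `|la| * `|b t - lb|) @ F --> (0:R).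
  suff : (fun t => `|a t - la| * `|b t| + `|la| * `|b t - lb|) @ F --> 0 * `|lb| + `|la| * 0.
    by rewrite mul0r mulr0 addr0.
  apply: cvgD; apply: cvgM.
  + by move/subr_cvg0/cvg_norm: ha; rewrite normr0.
  + exact: cvg_norm.
  + exact: cvg_cst.
  + by move/subr_cvg0/cvg_norm: hb; rewrite normr0.
apply: (squeeze_cvgr _ (cvg_cst 0) Hub).
near=> t; rewrite normr_ge0 /=.
have -> : mul (a t) (b t) - mul la lb = mul (a t - la) (b t) + mul la (b t - lb).
  by rewrite mulBx mulxB addrA subrK.
apply: (le_trans (ler_normD _ _)); apply: lerD; exact: (ba_submult BA).
Unshelve. all: by end_near. Qed.

End Alg.
Section Deriv.
Context (R : realType) (B : completeNormedModType R) (mul : B -> B -> B) (e : B)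
  (BA : banach_algebra mul e) (V : normedModType R).

Lemma line_cvg (x v : V) : (fun h : R => h *: v + x) @ 0^' --> x.
Proof.
have H : (fun h : R => h *: v + x) @ (nbhs (0:R)) --> 0 *: v + x.
  apply: cvgD; last exact: cvg_cst.
  exact: cvgZr_tmp cvg_id.
rewrite scale0r add0r in H.
apply: cvg_trans H; apply: cvg_app; exact: cvg_within.
Qed.

Lemma der_mul (f g : V -> B) (x v : V) :
  derivable f x v -> derivable g x v -> {for x, continuous g} ->
  (fun h : R => h^-1 *: (((fun y => mul (f y) (g y)) \o shift x) (h *: v)
      - mul (f x) (g x))) @ 0^' --> mul ('D_v f x) (g x) + mul (f x) ('D_v g x).
Proof.
move=> df dg cg.
have -> : (fun h : R => h^-1 *: (((fun y => mul (f y) (g y)) \o shift x) (h *: v)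
      - mul (f x) (g x))) =
   (fun h : R => mul (h^-1 *: ((f \o shift x) (h *: v) - f x)) (g (h *: v + x))
      + mul (f x) (h^-1 *: ((g \o shift x) (h *: v) - g x))).
  apply: funext => h /=.
  rewrite (ba_scalel BA) (ba_scaler BA) -scalerDr; congr (_ *: _).
  by rewrite (mulBx BA) (mulxB BA) addrA subrK.
apply: cvgD.
- apply: (mul_cvg BA); first exact: df.
  have h1 := @line_cvg x v. have h2 := cvg_comp _ g h1 cg. exact: h2.
- apply: (mul_cvg BA); first exact: cvg_cst.
  exact: dg.
Qed.

Lemma derivable_mul (f g : V -> B) (x v : V) :
  derivable f x v -> derivable g x v -> {for x, continuous g} ->
  derivable (fun y => mul (f y) (g y)) x v.
Proof.
move=> df dg cg; apply/cvg_ex; eexists; exact: der_mul.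
Qed.

Lemma derive_mul (f g : V -> B) (x v : V) :
  derivable f x v -> derivable g x v -> {for x, continuous g} ->
  'D_v (fun y => mul (f y) (g y)) x = mul ('D_v f x) (g x) + mul (f x) ('D_v g x).
Proof. by move=> df dg cg; apply: cvg_lim (der_mul df dg cg). Qed.

Lemma continuous_mul (f g : V -> B) (x : V) :
  {for x, continuous f} -> {for x, continuous g} ->
  {for x, continuous (fun y => mul (f y) (g y))}.
Proof. by move=> cf cg; apply: (mul_cvg BA). Qed.


Lemma inv_cvg {T} (F : set_system T) {FF : Filter F} (Zf Vf : T -> B) Z0 V0 :
  Zf @ F --> Z0 ->
  (\forall t \near F, Vf t - V0 = mul (Vf t) (mul (Z0 - Zf t) V0)) ->
  Vf @ F --> V0.
Proof.
move=> hZ hE; apply/subr_cvg0; apply: (@norm_cvg0 R B T F FF).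
set k := `|V0|.
have k0 : 0 <= k by exact: normr_ge0.
have hb : (fun t => 2 * k * k * `|Z0 - Zf t|) @ F --> (0:R).
  suff : (fun t => 2 * k * k * `|Z0 - Zf t|) @ F --> 2 * k * k * `|(0:B)|.
    by rewrite normr0 mulr0.
  apply: cvgMl_tmp; apply: cvg_norm.
  have := cvgB (cvg_cst Z0) hZ; rewrite subrr; exact.
apply: (squeeze_cvgr _ (cvg_cst 0) hb).
have hd : \forall t \near F, `|Z0 - Zf t| <= (2 * (k + 1))^-1.
  apply: cvgr_dist_le => //; rewrite invr_gt0; apply: mulr_gt0 => //.
  by apply: ltr_wpDl.
near=> t; rewrite normr_ge0 /=.
have E : Vf t - V0 = mul (Vf t) (mul (Z0 - Zf t) V0) by near: t; exact: hE.
have D : `|Z0 - Zf t| <= (2 * (k + 1))^-1 by near: t; exact: hd.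
set dl := `|Z0 - Zf t| in D *.
have dl0 : 0 <= dl by exact: normr_ge0.
have dk : dl * k <= 2^-1.
  apply: (le_trans (ler_wpM2r k0 D)).
  rewrite invfM mulrAC ler_pdivrMr ?ltr_wpDl // mulrDr mulr1 mulrC.
  rewrite -[X in X <= _]addr0; apply: lerD => //; exact: invr_ge0.
set a := `|Vf t|.
have h1 : `|Vf t - V0| <= a * (dl * k).
  rewrite E; apply: (le_trans (ba_submult BA _ _)); apply: ler_wpM2l; first exact: normr_ge0.
  exact: (ba_submult BA).
have h2 : a <= k + `|Vf t - V0|.
  by have := ler_normD V0 (Vf t - V0); rewrite [V0 + _]addrC subrK.
have a0 : 0 <= a by exact: normr_ge0.
have h3 : a <= 2 * k.
  have : a <= k + a * (dl * k) by exact: le_trans h2 (lerD (lexx _) h1).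
  move: dk; set w := dl * k => dk ha; nra.
have w0 : 0 <= dl * k by rewrite mulr_ge0.
apply: (le_trans h1); nra.
Unshelve. all: by end_near. Qed.

End Deriv.

Section Reg.
Context (R : realType) (B : completeNormedModType R) (mul : B -> B -> B) (e : B)
  (BA : banach_algebra mul e) (d : nat) (U : set 'rV[R]_d) (oU : open U).

Implicit Types f g : 'rV[R]_d -> B.
Definition eqU (f g : 'rV[R]_d -> B) := forall x, U x -> f x = g x.

Lemma near_U x : U x -> \forall y \near x, U y.
Proof. move=> Ux; exact: oU. Qed.

Lemma near_eqU (f g : 'rV[R]_d -> B) x : eqU f g -> U x -> \forall y \near x, f y = g y.
Proof. move=> fg Ux; near=> y; apply: fg; near: y; exact: near_U. Unshelve. all: by end_near. Qed.

Lemma partial_eqU i f g : eqU f g -> eqU (partial i f) (partial i g).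
Proof. move=> fg x Ux; rewrite /partial; apply: near_eq_derive; exact: near_eqU. Qed.

Lemma iter_partial_eqU l f g : eqU f g -> eqU (iter_partial l f) (iter_partial l g).
Proof. elim: l => [//|i l IH] fg /=; exact: partial_eqU (IH fg). Qed.

Lemma cont_eqU f g x : eqU f g -> U x -> {for x, continuous f} -> {for x, continuous g}.
Proof.
move=> fg Ux cf; rewrite /prop_for /continuous_at -(fg x Ux).
apply: cvg_trans cf; apply: (@near_eq_cvg _ _ (nbhs x)).
have := near_eqU fg Ux; apply: filterS => y ->. by [].
Qed.

Lemma Cs_on_eqU s f g : eqU f g -> Cs_on s U f -> Cs_on s U g.
Proof.
move=> fg cf l sl; have [c dv] := cf l sl; split.
  by move=> x Ux; apply: (cont_eqU (iter_partial_eqU l fg) Ux); exact: c.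
move=> sl' i x Ux; apply: (near_eq_derivable _ (dv sl' i x Ux)).
exact: near_eqU (iter_partial_eqU l fg) Ux.
Qed.

Lemma Cs_on_le s s' f : (s' <= s)%N -> Cs_on s U f -> Cs_on s' U f.
Proof.
move=> ss' cf l sl; have [c dv] := cf l (leq_trans sl ss'); split => // sl2.
by apply: dv; exact: leq_trans sl2 ss'.
Qed.

Lemma Cs_on_cont s f x : Cs_on s U f -> U x -> {for x, continuous f}.
Proof. by move=> cf Ux; have [c _] := cf [::] isT; exact: c. Qed.

Lemma Cs_on_der s f i x : Cs_on s.+1 U f -> U x -> derivable f x (unitv R i).
Proof. by move=> cf Ux; have [_ dv] := cf [::] isT; exact: dv. Qed.

Lemma iter_partial_rcons l i (f : 'rV[R]_d -> B) :
  iter_partial (rcons l i) f = iter_partial l (partial i f).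
Proof. by rewrite /iter_partial -cats1 foldr_cat. Qed.

Lemma Cs_on_partial s i f : Cs_on s.+1 U f -> Cs_on s U (partial i f).
Proof.
move=> cf l sl; have [c dv] := cf (rcons l i) ltac:(by rewrite size_rcons).
rewrite iter_partial_rcons in c dv; split => // sl2.
by apply: dv; rewrite size_rcons.
Qed.

Lemma Cs_on0 f : (forall x, U x -> {for x, continuous f}) -> Cs_on 0 U f.
Proof. by move=> c; case=> // _; split. Qed.

Lemma Cs_on_succ s f : (forall x, U x -> {for x, continuous f}) ->
  (forall i x, U x -> derivable f x (unitv R i)) ->
  (forall i, Cs_on s U (partial i f)) -> Cs_on s.+1 U f.
Proof.
move=> c dv cp; case/lastP => [|l i] sl; first by split.
rewrite iter_partial_rcons; rewrite size_rcons in sl.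
have [c' dv'] := cp i l sl; split => // sl2; apply: dv'.
by rewrite size_rcons in sl2.
Qed.

Lemma Cs_onD s f g : Cs_on s U f -> Cs_on s U g -> Cs_on s U (f + g).
Proof.
elim: s f g => [|s IH] f g cf cg.
  apply: Cs_on0 => x Ux; apply: continuousD; [exact: (Cs_on_cont cf Ux)|exact: (Cs_on_cont cg Ux)].
apply: Cs_on_succ.
- move=> x Ux; apply: continuousD; [exact: (Cs_on_cont cf Ux)|exact: (Cs_on_cont cg Ux)].
- move=> i x Ux; apply: derivableD; [exact: (Cs_on_der cf Ux)|exact: (Cs_on_der cg Ux)].
- move=> i; apply: (@Cs_on_eqU _ (partial i f + partial i g)).
    move=> x Ux; rewrite /partial deriveD //; [exact: (Cs_on_der cf Ux)|exact: (Cs_on_der cg Ux)].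
  by apply: IH; apply: Cs_on_partial.
Qed.

Lemma Cs_onN s f : Cs_on s U f -> Cs_on s U (- f).
Proof.
elim: s f => [|s IH] f cf.
  apply: Cs_on0 => x Ux; apply: continuousN; exact: (Cs_on_cont cf Ux).
apply: Cs_on_succ.
- move=> x Ux; apply: continuousN; exact: (Cs_on_cont cf Ux).
- move=> i x Ux; apply: derivableN; exact: (Cs_on_der cf Ux).
- move=> i; apply: (@Cs_on_eqU _ (- partial i f)).
    move=> x Ux; rewrite /partial deriveN //; exact: (Cs_on_der cf Ux).
  by apply: IH; apply: Cs_on_partial.
Qed.

Lemma Cs_onM s f g : Cs_on s U f -> Cs_on s U g ->
  Cs_on s U (fun y => mul (f y) (g y)).
Proof.
elim: s f g => [|s IH] f g cf cg.
  apply: Cs_on0 => x Ux; apply: (continuous_mul BA); [exact: (Cs_on_cont cf Ux)|exact: (Cs_on_cont cg Ux)].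
apply: Cs_on_succ.
- move=> x Ux; apply: (continuous_mul BA); [exact: (Cs_on_cont cf Ux)|exact: (Cs_on_cont cg Ux)].
- move=> i x Ux; apply: (derivable_mul BA); [exact: (Cs_on_der cf Ux)|exact: (Cs_on_der cg Ux)|exact: (Cs_on_cont cg Ux)].
- move=> i; apply: (@Cs_on_eqU _ ((fun y => mul (partial i f y) (g y)) + (fun y => mul (f y) (partial i g y)))).
    move=> x Ux; rewrite /partial (derive_mul BA) //;
      [exact: (Cs_on_der cf Ux)|exact: (Cs_on_der cg Ux)|exact: (Cs_on_cont cg Ux)].
  apply: Cs_onD; apply: IH.
  + exact: Cs_on_partial.
  + exact: Cs_on_le cg.
  + exact: Cs_on_le cf.
  + exact: Cs_on_partial.
Qed.


Definition invU Z V := forall y, U y -> is_inverse mul e (Z y) (V y).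

Lemma inv_identity Z V x y : invU Z V -> U x -> U y ->
  V y - V x = mul (V y) (mul (Z x - Z y) (V x)).
Proof.
move=> iZ Ux Uy; have [h1 h2] := iZ x Ux; have [h3 h4] := iZ y Uy.
rewrite (mulBx BA) (mulxB BA) h1 (ba_mul1r BA) (ba_assoc BA) h4 (ba_mul1l BA).
by [].
Qed.

Lemma inv_cont Z V x : invU Z V -> U x -> {for x, continuous Z} ->
  {for x, continuous V}.
Proof.
move=> iZ Ux cZ; apply: (inv_cvg (F:=nbhs x) (Zf:=Z) (Vf:=V) BA cZ).
near=> y; apply: inv_identity => //; near: y; exact: near_U.
Unshelve. all: by end_near. Qed.

Lemma inv_der Z V x v : invU Z V -> U x -> {for x, continuous Z} ->
  derivable Z x v ->
  (fun h : R => h^-1 *: ((V \o shift x) (h *: v) - V x)) @ 0^' -->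
     - mul (V x) (mul ('D_v Z x) (V x)).
Proof.
move=> iZ Ux cZ dZ.
have cV := inv_cont iZ Ux cZ.
have HL : (fun h : R => - mul (V (h *: v + x))
     (mul (h^-1 *: ((Z \o shift x) (h *: v) - Z x)) (V x))) @ 0^' -->
     - mul (V x) (mul ('D_v Z x) (V x)).
  apply: cvgN; apply: (mul_cvg BA).
    exact: (cvg_comp (fun h : R => h *: v + x) V (@line_cvg _ _ x v) cV).
  apply: (mul_cvg BA); [exact: dZ|exact: cvg_cst].
apply: (cvg_trans _ HL); apply: (@near_eq_cvg _ _ 0^' _).
have HU : \forall h \near 0^', U (h *: v + x).
  exact: (@line_cvg _ _ x v _ (near_U Ux)).
near=> h; have Uh : U (h *: v + x) by near: h.
rewrite /= (inv_identity iZ Ux Uh) (ba_scalel BA) (ba_scaler BA).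
by rewrite -opprB (mulNx BA) (mulxN BA) scalerN opprK.
Unshelve. all: by end_near. Qed.

Lemma derivable_inv Z V x v : invU Z V -> U x -> {for x, continuous Z} ->
  derivable Z x v -> derivable V x v.
Proof. by move=> iZ Ux cZ dZ; apply/cvg_ex; eexists; exact: (inv_der iZ Ux cZ dZ). Qed.

Lemma derive_inv Z V x v : invU Z V -> U x -> {for x, continuous Z} ->
  derivable Z x v -> 'D_v V x = - mul (V x) (mul ('D_v Z x) (V x)).
Proof. by move=> iZ Ux cZ dZ; apply: cvg_lim (inv_der iZ Ux cZ dZ). Qed.

Lemma Cs_on_inv s Z V : Cs_on s U Z -> invU Z V -> Cs_on s U V.
Proof.
elim: s Z V => [|s IH] Z V cZ iZ.
  by apply: Cs_on0 => x Ux; apply: (inv_cont iZ Ux); exact: (Cs_on_cont cZ Ux).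
have cV : Cs_on s U V by apply: IH iZ; exact: Cs_on_le cZ.
apply: Cs_on_succ.
- by move=> x Ux; apply: (inv_cont iZ Ux); exact: (Cs_on_cont cZ Ux).
- move=> i x Ux; apply: (derivable_inv iZ Ux); [exact: (Cs_on_cont cZ Ux)|exact: (Cs_on_der cZ Ux)].
- move=> i; apply: (@Cs_on_eqU _ (- (fun y => mul (V y) (mul (partial i Z y) (V y))))).
    move=> x Ux; rewrite /partial (derive_inv iZ Ux) //;
      [exact: (Cs_on_cont cZ Ux)|exact: (Cs_on_der cZ Ux)].
  apply: Cs_onN; apply: Cs_onM => //; apply: Cs_onM => //.
  exact: Cs_on_partial.
Qed.


Lemma iter_partialD n l f g : Cs_on n U f -> Cs_on n U g -> (size l <= n)%N ->
  eqU (iter_partial l (f + g)) (iter_partial l f + iter_partial l g).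
Proof.
move=> cf cg; elim: l => [//|i l IH] /= sl x Ux.
have sl' : (size l <= n)%N by apply: ltnW.
rewrite (partial_eqU i (IH sl') Ux) /partial deriveD //.
  by have [_ dv] := cf l sl'; exact: dv.
by have [_ dv] := cg l sl'; exact: dv.
Qed.

Definition subclosed (P : seq 'I_d -> Prop) :=
  forall m1 m2, subseq m1 m2 -> P m2 -> P m1.

Lemma prod_bound n : forall (P : seq 'I_d -> Prop) f g (phi psi : nat -> R) x,
  U x -> subclosed P -> Cs_on n U f -> Cs_on n U g ->
  (forall m, P m -> (size m <= n)%N -> `|iter_partial m f x| <= phi (size m)) ->
  (forall m, P m -> (size m <= n)%N -> `|iter_partial m g x| <= psi (size m)) ->
  forall l, P l -> size l = n ->
  `|iter_partial l (fun y => mul (f y) (g y)) x| <=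
     \sum_(j < n.+1) 'C(n, j)%:R * phi j * psi (n - j)%N.
Proof.
elim: n => [|n IH] P f g phi psi x Ux sP cf cg hf hg l Pl sl.
  move: sl Pl; case: l => // _ Pl.
  rewrite big_ord_recl big_ord0 addr0 /= bin0 mul1r.
  apply: (le_trans (ba_submult BA _ _)); apply: ler_pM; try exact: normr_ge0.
    exact: (hf [::]).
  exact: (hg [::]).
move: sl Pl; case/lastP: l => [//|l i]; rewrite size_rcons => -[sl] Pl.
set P' := fun m => P (rcons m i).
have sP' : subclosed P'.
  by move=> m1 m2 sm; rewrite /P'; apply: sP; rewrite -!cats1 subseq_cat2r.
have PP' : forall m, P' m -> P m.
  by move=> m; apply: sP; exact: subseq_rcons.
set F1 := fun y => mul (partial i f y) (g y).
set F2 := fun y => mul (f y) (partial i g y).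
have cF1 : Cs_on n U F1 by apply: Cs_onM; [exact: Cs_on_partial|exact: Cs_on_le cg].
have cF2 : Cs_on n U F2 by apply: Cs_onM; [exact: Cs_on_le cf|exact: Cs_on_partial].
have E : eqU (partial i (fun y => mul (f y) (g y))) (F1 + F2).
  move=> y Uy; rewrite /partial (derive_mul BA) //.
  - exact: (Cs_on_der cf Uy).
  - exact: (Cs_on_der cg Uy).
  - exact: (Cs_on_cont cg Uy).
rewrite iter_partial_rcons (iter_partial_eqU l E Ux).
rewrite (iter_partialD cF1 cF2 (eq_leq sl) Ux) pascal_sum.
apply: (le_trans (ler_normD _ _)); apply: lerD.
- apply: (IH P' (partial i f) g (fun k => phi k.+1) psi x Ux sP' _ (Cs_on_le _ cg)) => //.
  + exact: Cs_on_partial.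
  + move=> m Pm sm; rewrite -iter_partial_rcons.
    have := hf _ Pm; rewrite size_rcons; apply; exact: sm.
  + move=> m Pm sm; apply: hg; [exact: PP'|exact: leqW].
- apply: (IH P' f (partial i g) phi (fun k => psi k.+1) x Ux sP' (Cs_on_le _ cf)) => //.
  + exact: Cs_on_partial.
  + move=> m Pm sm; apply: hf; [exact: PP'|exact: leqW].
  + move=> m Pm sm; rewrite -iter_partial_rcons.
    have := hg _ Pm; rewrite size_rcons; apply; exact: sm.
Qed.


Lemma iter_partialN n l f : Cs_on n U f -> (size l <= n)%N ->
  eqU (iter_partial l (- f)) (- iter_partial l f).
Proof.
move=> cf; elim: l => [//|i l IH] /= sl x Ux.
have sl' : (size l <= n)%N by apply: ltnW.
rewrite (partial_eqU i (IH sl') Ux) /partial deriveN //.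
by have [_ dv] := cf l sl'; exact: dv.
Qed.

End Reg.

Section Neumann.
Context (R : realType) (B : completeNormedModType R) (mul : B -> B -> B) (e : B)
  (BA : banach_algebra mul e).

Definition pw (T : B) (n : nat) := iter n (mul (- T)) e.
Definition neu (T : B) := limn (series (pw T)).

Lemma pw_comm T n : mul (pw T n) (- T) = mul (- T) (pw T n).
Proof.
elim: n => [|n IH] /=; first by rewrite (ba_mul1l BA) (ba_mul1r BA).
by rewrite -(ba_assoc BA) IH.
Qed.

Lemma pw_norm T n : `|T| <= 2^-1 -> `|pw T n| <= `|e| * (2^-1) ^+ n.
Proof.
move=> hT; elim: n => [|n IH] /=; first by rewrite expr0 mulr1.
apply: (le_trans (ba_submult BA _ _)); rewrite normrN exprS mulrCA.
by apply: ler_pM => //; exact: normr_ge0.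
Qed.

Lemma neumannP T : `|T| <= 2^-1 ->
  mul (e + T) (neu T) = e /\ mul (neu T) (e + T) = e.
Proof.
move=> hT.
have cS : cvgn (series (pw T)).
  apply: normed_cvg.
  have : cvgn (series (geometric `|e| (2^-1 : R))).
    by apply: is_cvg_geometric_series; rewrite ger0_norm // invf_lt1 // ltr1n.
  apply: series_le_cvg => n; [exact: normr_ge0| |].
    by rewrite /geometric /=; apply: mulr_ge0; [exact: normr_ge0|exact: exprn_ge0].
  exact: pw_norm.
have p0 : pw T n @[n --> \oo] --> 0 by exact: cvg_series_cvg_0.
have L : forall n, mul (e + T) (series (pw T) n) = e - pw T n.
  elim=> [|n IH]; first by rewrite /series /= big_geq // (mulx0 BA) subrr.
  rewrite seriesSr (ba_mulDr BA) IH (ba_mulDl BA) (ba_mul1l BA) /pw /= -/(pw T n).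
  by rewrite (mulNx BA) opprK -addrA addKr.
have Rr : forall n, mul (series (pw T) n) (e + T) = e - pw T n.
  elim=> [|n IH]; first by rewrite /series /= big_geq // (mul0x BA) subrr.
  rewrite seriesSr (ba_mulDl BA) IH (ba_mulDr BA) (ba_mul1r BA) /pw /= -/(pw T n).
  rewrite -pw_comm (mulxN BA) opprK -addrA addKr.
  by [].
have lS : series (pw T) n @[n --> \oo] --> neu T by exact: cS.
split.
- have h1 : mul (e + T) (series (pw T) n) @[n --> \oo] --> mul (e + T) (neu T).
    apply: (mul_cvg BA) => //; exact: cvg_cst.
  have h2 : mul (e + T) (series (pw T) n) @[n --> \oo] --> e.
    under eq_fun do rewrite L.
    have H : (fun n => e - pw T n) @ \oo --> e - 0 by apply: cvgB => //; exact: cvg_cst.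
    by rewrite subr0 in H.
  exact: (cvg_unique _ h1 h2).
- have h1 : mul (series (pw T) n) (e + T) @[n --> \oo] --> mul (neu T) (e + T).
    apply: (mul_cvg BA) => //; exact: cvg_cst.
  have h2 : mul (series (pw T) n) (e + T) @[n --> \oo] --> e.
    under eq_fun do rewrite Rr.
    have H : (fun n => e - pw T n) @ \oo --> e - 0 by apply: cvgB => //; exact: cvg_cst.
    by rewrite subr0 in H.
  exact: (cvg_unique _ h1 h2).
Qed.

End Neumann.

Lemma term_le (R : realType) (M C : R) n j : 0 <= M -> 0 <= C -> (j <= n)%N ->
  'C(n, j)%:R * (2 * M * C ^+ j * (4 ^ j * j`!)%:R) * (2^-1 * (2 * C) ^+ (n - j)) <=
  M * C ^+ n * (n`! * 2 ^ (n + j))%:R.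
Proof.
move=> M0 C0 jn.
have -> : 'C(n, j)%:R * (2 * M * C ^+ j * (4 ^ j * j`!)%:R) * (2^-1 * (2 * C) ^+ (n - j)) =
   M * C ^+ n * ('C(n, j) * (4 ^ j * j`!) * 2 ^ (n - j))%:R.
  rewrite -{3}(subnKC jn) exprD exprMn !natrM !natrX.
  by field.
apply: ler_wpM2l; first by apply: mulr_ge0 => //; exact: exprn_ge0.
rewrite ler_nat.
have hb := bin_fact jn.
have e4 : (4 ^ j = 2 ^ j * 2 ^ j)%N by rewrite -expnMn.
have e2 : (2 ^ (n + j) = 2 ^ (n - j) * 2 ^ j * 2 ^ j)%N.
  by rewrite -!expnD subnK.
rewrite e4 e2.
have h1 : (0 < (n - j)`!)%N := fact_gt0 _.
have h2 : ('C(n, j) * j`! <= n`!)%N.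
  by rewrite -hb mulnA leq_pmulr.
set a := (2 ^ j)%N; set b := (2 ^ (n - j))%N.
have := leq_mul (leq_mul (leq_mul h2 (leqnn b)) (leqnn a)) (leqnn a).
lia.
Qed.

Lemma dpartialE (R : realType) (d : nat) (B : normedModType R) (beta : 'I_d -> nat)
  (f : 'rV[R]_d -> B) : dpartial beta f = iter_partial (flat beta) f.
Proof. by []. Qed.

Theorem proposition24 (R : realType) (B : completeNormedModType R)
    (mul : B -> B -> B) (e : B) (d : nat) (U : set 'rV[R]_d) (s : nat)
    (A X Ainv : 'rV[R]_d -> B) (eps M C : R) :
  banach_algebra mul e ->
  open U ->
  Cs_on s U A -> Cs_on s U X ->
  (forall lam, U lam -> is_inverse mul e (A lam) (Ainv lam)) ->
  0 < eps -> 1 <= M -> 1 <= C ->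
  (forall (beta : 'I_d -> nat) lam, (mindex_norm beta <= s)%N -> U lam ->
     `|dpartial beta Ainv lam| <= M * C ^+ mindex_norm beta) ->
  (forall (beta : 'I_d -> nat) lam, (mindex_norm beta <= s)%N -> U lam ->
     `|dpartial beta X lam| <= eps * C ^+ mindex_norm beta) ->
  eps * M <= 2^-1 ->
  exists Y : 'rV[R]_d -> B,
    (forall lam, U lam -> is_inverse mul e (A lam + X lam) (Y lam)) /\
    Cs_on s U Y /\
    (forall (beta : 'I_d -> nat) lam, (mindex_norm beta <= s)%N -> U lam ->
       `|dpartial beta Y lam| <=
         2 * (\sum_(1 <= k < (mindex_norm beta).+2)
                 (k%:R ^+ mindex_norm beta * `|e| ^+ k))
           * M * (2 * C) ^+ mindex_norm beta).
Proof.
move=> BA oU cA cX iA eps0 M1 C1 hAinv hX epsM.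
have M0 : 0 <= M by apply: le_trans M1.
have C0 : 0 <= C by apply: le_trans C1.
have tro : transitive (@leo d) by move=> a b c; exact: leq_trans.
have hA' : forall m x, sorted (@leo d) m -> (size m <= s)%N -> U x ->
    `|iter_partial m Ainv x| <= M * C ^+ size m.
  move=> m x sm ms Ux; have E := sorted_flatE sm.
  have := hAinv (fun i => count_mem i m) x; rewrite dpartialE /mindex_norm -size_flat -E.
  by apply.
have hX' : forall m x, sorted (@leo d) m -> (size m <= s)%N -> U x ->
    `|iter_partial m X x| <= eps * C ^+ size m.
  move=> m x sm ms Ux; have E := sorted_flatE sm.
  have := hX (fun i => count_mem i m) x; rewrite dpartialE /mindex_norm -size_flat -E.
  by apply.
have nA : forall x, U x -> `|Ainv x| <= M.
  by move=> x Ux; have := hA' [::] x isT isT Ux; rewrite expr0 mulr1.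
have nX : forall x, U x -> `|X x| <= eps.
  by move=> x Ux; have := hX' [::] x isT isT Ux; rewrite expr0 mulr1.
set T := fun lam => mul (Ainv lam) (X lam).
have nT : forall x, U x -> `|T x| <= 2^-1.
  move=> x Ux; apply: (le_trans (ba_submult BA _ _)); apply: le_trans epsM.
  rewrite mulrC; apply: ler_pM; try exact: normr_ge0; [exact: nX|exact: nA].
set Y := fun lam => mul (neu mul e (T lam)) (Ainv lam).
have invY : forall lam, U lam -> is_inverse mul e (A lam + X lam) (Y lam).
  move=> lam Ul; have [h1 h2] := neumannP BA (nT lam Ul); have [a1 a2] := iA lam Ul.
  have EAX : A lam + X lam = mul (A lam) (e + T lam).
    by rewrite (ba_mulDr BA) (ba_mul1r BA) /T (ba_assoc BA) a1 (ba_mul1l BA).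
  split.
  - rewrite EAX /Y -(ba_assoc BA) (ba_assoc BA (e + T lam)) h1 (ba_mul1l BA) a1.
    by [].
  - rewrite /Y -(ba_assoc BA) (ba_mulDr BA) a2 /T.
    by rewrite -[e + mul (Ainv lam) (X lam)]/(e + T lam) h2.
have cAinv : Cs_on s U Ainv := Cs_on_inv BA oU cA iA.
have cY : Cs_on s U Y.
  apply: (Cs_on_inv BA oU (Cs_onD oU cA cX)) => lam Ul; exact: invY.
exists Y; split => //; split => //.
move=> beta lam hb Ul.
set T' := fun lam => mul (X lam) (Ainv lam).
have cT' : Cs_on s U T' := Cs_onM BA oU cX cAinv.
have sc : forall l : seq 'I_d, subclosed (fun m => subseq m l).
  by move=> l m1 m2 h12 h2; exact: subseq_trans h12 h2.
have hT' : forall m x, sorted (@leo d) m -> (size m <= s)%N -> U x ->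
    `|iter_partial m T' x| <= 2^-1 * (2 * C) ^+ size m.
  move=> m x sm ms Ux.
  have := prod_bound BA oU (P := fun m' => subseq m' m) (phi := fun k => eps * C ^+ k)
    (psi := fun k => M * C ^+ k) Ux (sc m) (Cs_on_le ms cX) (Cs_on_le ms cAinv) _ _
    (subseq_refl m) erefl.
  have Hf : forall m', subseq m' m -> (size m' <= size m)%N ->
      `|iter_partial m' X x| <= eps * C ^+ size m'.
    move=> m' sm' _; apply: hX' => //; first exact: (subseq_sorted tro) sm' sm.
    exact: leq_trans (size_subseq sm') ms.
  have Hg : forall m', subseq m' m -> (size m' <= size m)%N ->
      `|iter_partial m' Ainv x| <= M * C ^+ size m'.
    move=> m' sm' _; apply: hA' => //; first exact: (subseq_sorted tro) sm' sm.
    exact: leq_trans (size_subseq sm') ms.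
  move=> /(_ Hf Hg) /le_trans; apply.
  set k := size m.
  have -> : \sum_(j < k.+1) 'C(k, j)%:R * (eps * C ^+ j) * (M * C ^+ (k - j)%N) =
      eps * M * (C + C) ^+ k.
    rewrite exprDn mulr_sumr; apply: eq_bigr => j _.
    by rewrite -mulr_natl; ring.
  have -> : C + C = 2 * C by ring.
  by apply: ler_wpM2r => //; apply: exprn_ge0; rewrite mulr_ge0.
have key : forall k l x, sorted (@leo d) l -> size l = k -> (k <= s)%N -> U x ->
    `|iter_partial l Y x| <= 2 * M * C ^+ k * (4 ^ k * k`!)%:R.
  elim/ltn_ind => k IH l x sl sz ks Ux.
  set t := `|iter_partial l Y x|.
  have EY : forall y, U y -> Y y = (Ainv + - (fun y => mul (Y y) (T' y))) y.
    move=> y Uy /=; have [h1 h2] := invY y Uy; have [a1 a2] := iA y Uy.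
    have H : Y y + mul (Y y) (T' y) = Ainv y.
      rewrite -{1}[Y y](ba_mul1r BA) -[in mul (Y y) e]a1 /T' -(ba_mulDr BA).
      by rewrite -(ba_mulDl BA) (ba_assoc BA) h2 (ba_mul1l BA).
    by change (Y y = Ainv y - mul (Y y) (T' y)); rewrite -H addrK.
  have cYT : Cs_on k U (fun y => mul (Y y) (T' y)).
    exact: Cs_on_le ks (Cs_onM BA oU cY cT').
  have cN := Cs_onN oU cYT.
  have E1 : iter_partial l Y x =
      iter_partial l Ainv x - iter_partial l (fun y => mul (Y y) (T' y)) x.
    rewrite (iter_partial_eqU oU l EY Ux).
    rewrite (iter_partialD oU (Cs_on_le ks cAinv) cN (eq_leq sz) Ux) /=.
    have HN := iter_partialN oU cYT (eq_leq sz) Ux.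
    transitivity (iter_partial l Ainv x + iter_partial l (- (fun y => mul (Y y) (T' y))) x); first by [].
    by rewrite HN.
  set phi := fun j => if (j < k)%N then 2 * M * C ^+ j * (4 ^ j * j`!)%:R else t.
  set psi := fun j => 2^-1 * (2 * C) ^+ j.
  have Hf : forall m, subseq m l -> (size m <= k)%N ->
      `|iter_partial m Y x| <= phi (size m).
    move=> m ml mk; rewrite /phi; case: ltnP => h.
      apply: (IH (size m) h m x) => //; first exact: (subseq_sorted tro) ml sl.
      exact: leq_trans (ltnW h) ks.
    have /eqP -> : m == l.
      by rewrite -(size_subseq_leqif ml).2 sz eqn_leq mk h.
    by [].
  have Hg : forall m, subseq m l -> (size m <= k)%N ->
      `|iter_partial m T' x| <= psi (size m).
    move=> m ml mk; apply: hT' => //; first exact: (subseq_sorted tro) ml sl.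
    exact: leq_trans mk ks.
  have PB := prod_bound BA oU (P := fun m => subseq m l) (phi := phi) (psi := psi)
    Ux (sc l) (Cs_on_le ks cY) (Cs_on_le ks cT') Hf Hg (subseq_refl l) sz.
  rewrite big_ord_recr /= binn subnn /phi ltnn /psi expr0 mulr1 mul1r in PB.
  set S := \sum_(j < k) _ in PB.
  have S_le : S <= M * C ^+ k * (\sum_(j < k) k`! * 2 ^ (k + j))%:R.
    rewrite natr_sum mulr_sumr; apply: ler_sum => j _; rewrite ltn_ord.
    by apply: term_le => //; exact: ltnW (ltn_ord j).
  have N1 := nat1 k; rewrite -(ler_nat R) natrD in N1.
  have hAl : `|iter_partial l Ainv x| <= M * C ^+ k.
    by rewrite -sz; apply: hA' => //; rewrite sz.
  have tle : t <= `|iter_partial l Ainv x| + `|iter_partial l (fun y => mul (Y y) (T' y)) x|.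
    by rewrite /t E1 ler_normB.
  set K := M * C ^+ k.
  have K0 : 0 <= K by apply: mulr_ge0 => //; exact: exprn_ge0.
  set N1s := ((\sum_(j < k) k`! * 2 ^ (k + j))%N)%:R in S_le N1.
  set N2 := ((4 ^ k * k`!)%N)%:R in N1 *.
  have KN := ler_wpM2l K0 N1.
  rewrite -/K; rewrite mulrDr mulr1 in KN.
  have -> : 2 * M * C ^+ k * N2 = 2 * (K * N2) by rewrite /K; ring.
  rewrite -/K in S_le hAl.
  clearbody K N1s N2 S t; lra.
rewrite dpartialE.
set n := mindex_norm beta.
have kb := key n (flat beta) lam (sorted_flat beta) (size_flat beta) hb Ul.
have [e0|en0] := eqVneq e 0.
  have z : forall b : B, b = 0 by move=> b; rewrite -(ba_mul1l BA b) e0 (mul0x BA).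
  rewrite (z (iter_partial (flat beta) Y lam)) normr0.
  apply: mulr_ge0; last by apply: exprn_ge0; rewrite mulr_ge0.
  apply: mulr_ge0 => //; apply: mulr_ge0 => //.
  by apply: sumr_ge0 => k _; apply: mulr_ge0; apply: exprn_ge0.
have Ep : 0 < `|e| by rewrite normr_gt0.
have E1 : 1 <= `|e|.
  have h := ba_submult BA e e; rewrite (ba_mul1l BA) in h.
  by rewrite -(ler_pM2r Ep) mul1r.
apply: (le_trans kb).
have sum_ge : (n.+1)%:R ^+ n <= \sum_(1 <= k < n.+2) (k%:R ^+ n * `|e| ^+ k).
  rewrite big_nat_recr //=.
  rewrite -[X in X <= _]add0r; apply: lerD.
    by apply: sumr_ge0 => k _; apply: mulr_ge0; apply: exprn_ge0.
  rewrite -[X in X <= _]mulr1; apply: ler_wpM2l; first exact: exprn_ge0.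
  exact: exprn_ege1.
have n2 : ((2 ^ n * n`!)%N)%:R <= (n.+1)%:R ^+ n :> R.
  by rewrite -natrX ler_nat nat2.
have -> : 2 * M * C ^+ n * ((4 ^ n * n`!)%N)%:R =
    (2 * M * C ^+ n * 2 ^+ n) * ((2 ^ n * n`!)%N)%:R.
  have e4 : (4 ^ n = 2 ^ n * 2 ^ n)%N by rewrite -expnMn.
  by rewrite e4 !natrM !natrX; ring.
have -> : 2 * (\sum_(1 <= k < n.+2) (k%:R ^+ n * `|e| ^+ k)) * M * (2 * C) ^+ n =
    (2 * M * C ^+ n * 2 ^+ n) * (\sum_(1 <= k < n.+2) (k%:R ^+ n * `|e| ^+ k)).
  by rewrite exprMn; ring.
apply: ler_wpM2l; first by rewrite !mulr_ge0 //; exact: exprn_ge0.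
exact: le_trans n2 sum_ge.
Qed.
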